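(* Let ${\mathbf{x}}^* \in \mathbb{R}^n$, ${\mathbf{x}}^*\ge 0$, $\mathcal{J} = \mathrm{supp}({\mathbf{x}}^* )$, and $s \in [\|{\mathbf{x}}^*\|_\infty, \infty]$. Let $\mathcal{J}' \supseteq \mathcal{J}$ be an index set for which there exists a vector ${\mathbf{c}}$ with $$\frac{P {\mathbf{e}}_j}{\| P {\mathbf{e}}_j \|_2} \cdot {\mathbf{c}} = 1 \ \ \forall j \in \mathcal{J}', \qquad \frac{P {\mathbf{e}}_i}{\| P {\mathbf{e}}_i \|_2} \cdot {\mathbf{c}} < 1 \ \ \forall i \in (\mathcal{J}')^c. \qquad (\dagger)$$ Then every solution ${\mathbf{y}}$ of $$\min_{0 \leq {\mathbf{x}} \leq s} \| W {\mathbf{x}} \|_1 \quad \text{subject to} \quad A {\mathbf{x}} = A {\mathbf{x}}^*$$ satisfies $\mathrm{supp}({\mathbf{y}}) \subseteq \mathcal{J}'$. Consequently, every such solution satisfies $\mathrm{supp}({\mathbf{y}}) \subseteq \overline{\mathcal{J}}$, where $\overline{\mathcal{J}} = \bigcap\{\mathcal{J}' : \mathcal{J}' \supseteq \mathcal{J} \text{ and there exists } {\mathbf{c}} \text{ such that } (\dagger) \text{ holds for } \mathcal{J}'\}$, assumed nonempty.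
   Context: $A \in \mathbb{R}^{m\times n}$ is a matrix, $A^\dagger$ its Moore–Penrose pseudoinverse, and $P = A^\dagger A$ the orthogonal projection onto $\mathcal{N}(A)^\perp$. ${\mathbf{e}}_1,\dots,{\mathbf{e}}_n$ are the standard unit vectors, assumed not to lie in $\mathcal{N}(A)$, so $w_i := \|P{\mathbf{e}}_i\|_2 > 0$; $W = \mathrm{diag}(w_1,\dots,w_n)$. Inequalities are componentwise; $s=\infty$ means only ${\mathbf{x}}\ge 0$. *)

(* Defs.v *)
From HB Require Import structures.
From mathcomp Require Import all_boot all_order all_algebra.
Set Implicit Arguments. Unset Strict Implicit. Unset Printing Implicit Defensive.
Import Order.TTheory GRing.Theory Num.Theory.
Local Open Scope ring_scope.

Section Defs.
Variables (R : rcfType) (m n : nat).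

(* X is the Moore-Penrose pseudoinverse of A (the four Penrose conditions,
   which determine it uniquely). *)
Definition is_MP_pinv (A : 'M[R]_(m, n)) (X : 'M[R]_(n, m)) : Prop :=
  [/\ A *m X *m A = A, X *m A *m X = X, (A *m X)^T = A *m X & (X *m A)^T = X *m A].

Definition evec (i : 'I_n) : 'cV[R]_n := delta_mx i 0.

Definition dotv (u v : 'cV[R]_n) : R := \sum_k u k 0 * v k 0.
Definition norm2 (u : 'cV[R]_n) : R := Num.sqrt (dotv u u).
Definition norm1 (u : 'cV[R]_n) : R := \sum_k `|u k 0|.
Definition norminf (u : 'cV[R]_n) : R := \big[Num.max/0]_k `|u k 0|.

Definition supp (u : 'cV[R]_n) : {set 'I_n} := [set i | u i 0 != 0].

Definition Wmat (P : 'M[R]_n) : 'M[R]_n :=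
  diag_mx (\row_i norm2 (P *m evec i)).

(* feasible set of the program: 0 <= x <= s (s = None means s = +oo), A x = A x* *)
Definition feasible (A : 'M[R]_(m, n)) (s : option R) (xs x : 'cV[R]_n) : Prop :=
  (forall i, 0 <= x i 0) /\ (forall t, s = Some t -> forall i, x i 0 <= t) /\
  A *m x = A *m xs.

Definition is_solution (A : 'M[R]_(m, n)) (P : 'M[R]_n) (s : option R)
  (xs y : 'cV[R]_n) : Prop :=
  feasible A s xs y /\
  forall x, feasible A s xs x -> norm1 (Wmat P *m y) <= norm1 (Wmat P *m x).

Definition dagger (P : 'M[R]_n) (J' : {set 'I_n}) : Prop :=
  exists c : 'cV[R]_n,
    (forall j, j \in J' -> dotv ((norm2 (P *m evec j))^-1 *: (P *m evec j)) c = 1) /\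
    (forall i, i \notin J' -> dotv ((norm2 (P *m evec i))^-1 *: (P *m evec i)) c < 1).

Definition admissible (P : 'M[R]_n) (xs : 'cV[R]_n) (J' : {set 'I_n}) : Prop :=
  supp xs \subset J' /\ dagger P J'.

Definition in_Jbar (P : 'M[R]_n) (xs : 'cV[R]_n) (i : 'I_n) : Prop :=
  forall J', admissible P xs J' -> i \in J'.

End Defs.

(* Main.v *)
Require Import Defs.
From HB Require Import structures.
From mathcomp Require Import all_boot all_order all_algebra ring lra.
Import Order.TTheory GRing.Theory Num.Theory.
Local Open Scope ring_scope.

Lemma evecE (R : rcfType) (n k : nat) (M : 'M[R]_(k, n)) i j :
  (M *m evec R i) j 0 = M j i.
Proof. by rewrite /evec -colE !mxE. Qed.

Lemma dot_lin (R : rcfType) (n : nat) (M : 'M[R]_n) (y c : 'cV[R]_n) :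
  dotv (M *m y) c = \sum_i y i 0 * dotv (M *m evec R i) c.
Proof.
rewrite /dotv.
under eq_bigr => k _ do rewrite mxE big_distrl.
rewrite exchange_big; apply: eq_bigr => i _.
rewrite big_distrr; apply: eq_bigr => k _ /=.
by rewrite evecE; ring.
Qed.

Lemma dotZ (R : rcfType) (n : nat) a (u c : 'cV[R]_n) :
  dotv (a *: u) c = a * dotv u c.
Proof.
rewrite /dotv big_distrr; apply: eq_bigr => k _; by rewrite mxE /= mulrA.
Qed.

Lemma norm2_gt0 (R : rcfType) (n : nat) (u : 'cV[R]_n) : u != 0 -> 0 < norm2 u.
Proof.
move=> hu; rewrite /norm2 sqrtr_gt0 lt_def; apply/andP; split; last first.
  by rewrite /dotv sumr_ge0 // => k _; rewrite -expr2 sqr_ge0.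
apply/negP => /eqP h; move/negP: hu; apply; apply/eqP/matrixP => k j.
rewrite ord1 mxE.
have h' : \sum_(l | predT l) u l 0 ^+ 2 = 0.
  by rewrite -[RHS]h /dotv; apply: eq_bigr => l _; rewrite expr2.
have := psumr_eq0P (fun l _ => sqr_ge0 (u l 0)) h' (isT : predT k).
by move/eqP; rewrite expr2 mulf_eq0 orbb => /eqP.
Qed.

Lemma norm1W (R : rcfType) (n : nat) (P : 'M[R]_n) (y : 'cV[R]_n) :
  (forall i, 0 <= y i 0) ->
  norm1 (Wmat P *m y) = \sum_i norm2 (P *m evec R i) * y i 0.
Proof.
move=> hy; rewrite /norm1 /Wmat mul_diag_mx; apply: eq_bigr => i _.
rewrite !mxE ger0_norm // mulr_ge0 //.
by rewrite /norm2 sqrtr_ge0.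
Qed.

Theorem proposition1 (R : rcfType) (m n : nat) (A : 'M[R]_(m, n))
  (Adag : 'M[R]_(n, m)) (hAdag : is_MP_pinv A Adag)
  (hE : forall i : 'I_n, A *m evec R i != 0)
  (xs : 'cV[R]_n) (hxs : forall i, 0 <= xs i 0)
  (s : option R) (hs : forall t, s = Some t -> norminf xs <= t) :
  let P := Adag *m A in
  (forall J' : {set 'I_n}, admissible P xs J' ->
     forall y, is_solution A P s xs y -> supp y \subset J') /\
  ((exists J', admissible P xs J') ->
     forall y, is_solution A P s xs y ->
       forall i, i \in supp y -> in_Jbar P xs i).
Proof.
move=> P.
have part1 : forall J' : {set 'I_n}, admissible P xs J' ->
     forall y, is_solution A P s xs y -> supp y \subset J'.
  move=> J' [hsupp [c [hin hout]]] y [[hy0 [_ hAy]] hmin].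
  case: hAdag => hAXA _ _ _.
  have hAP : A *m P = A by rewrite /P mulmxA.
  pose w i := norm2 (P *m evec R i).
  pose d i := dotv (P *m evec R i) c.
  have wpos : forall i, 0 < w i.
    move=> i; apply: norm2_gt0; apply/negP => /eqP h.
    by move/negP: (hE i); apply; rewrite -hAP -mulmxA h mulmx0.
  have din : forall j, j \in J' -> d j = w j.
    move=> j /hin; rewrite dotZ => h.
    have := wpos j; rewrite lt0r => /andP [hw _].
    by apply: (mulfI (invr_neq0 hw)); rewrite /d h mulVf.
  have dout : forall i, i \notin J' -> d i < w i.
    by move=> i /hout; rewrite dotZ mulrC ltr_pdivrMr ?wpos // mul1r.
  have dle : forall i, d i <= w i.
    by move=> i; case: (boolP (i \in J')) => hi;
      [rewrite din | apply: ltW; apply: dout].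
  have hPy : P *m y = P *m xs by rewrite /P -!mulmxA hAy.
  have hS : \sum_i y i 0 * d i = \sum_i xs i 0 * w i.
    rewrite -(@dot_lin R n P y c) hPy dot_lin; apply: eq_bigr => i _.
    case: (boolP (i \in J')) => hi; first by rewrite -/(d i) din.
    have : xs i 0 = 0.
      apply/eqP; apply: contraR hi => hx.
      by apply: (subsetP hsupp); rewrite inE.
    by move=> ->; rewrite !mul0r.
  have hxsf : feasible A s xs xs.
    split=> //; split=> // t ht i.
    apply: le_trans (hs t ht).
    rewrite /norminf (bigD1 i) //= le_max; apply/orP; left.
    exact: ler_norm.
  have := hmin xs hxsf; rewrite !norm1W //.
  move=> hle.
  have hsum0 : \sum_i y i 0 * (w i - d i) = 0.
    apply/eqP; rewrite eq_le; apply/andP; split; last first.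
      by apply: sumr_ge0 => i _; rewrite mulr_ge0 // subr_ge0.
    under eq_bigr => i _ do rewrite mulrBr.
    rewrite sumrB subr_le0 hS.
    rewrite (eq_bigr (fun i => w i * y i 0)); last by move=> i _; rewrite mulrC.
    by rewrite [X in _ <= X](eq_bigr (fun i => w i * xs i 0)) //; move=> i _; rewrite mulrC.
  apply/subsetP => i; rewrite inE => hyi.
  apply/negPn/negP => hi.
  have hpos : forall l, predT l -> 0 <= y l 0 * (w l - d l).
    by move=> l _; rewrite mulr_ge0 // subr_ge0.
  have := psumr_eq0P hpos hsum0 (isT : predT i).
  move/eqP; rewrite mulf_eq0 (negbTE hyi) /= subr_eq0 => h.
  have := dout i hi; rewrite lt_neqAle => /andP [hne _].
  by move: hne; rewrite eq_sym h.
split=> //.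
move=> _ y hy i hi J' hJ'.
exact: (subsetP (part1 J' hJ' y hy)).
Qed.
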